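(* Let $c\ge0$, $d>0$, $\beta\ge0$, $\alpha\in\mathbb{R}$ and $p_{(\alpha,\beta)}(\omega):=(\alpha-\omega^2)(c-id\omega-\omega^2)-\beta\omega^2$. Then: (i) If $\alpha<0$, then $p_{(\alpha,\beta)}$ has at least two roots of the form $i\mu$, $\mu\in\mathbb{R}$, where $\mu>0$ for exactly one root and $\mu\le0$ ($\mu<0$ if $c>0$) for at least one root. (ii) If $\alpha>0$, then all roots of $p_{(\alpha,\beta)}$ of the form $i\mu$, $\mu\in\mathbb{R}$, satisfy $\mu\le0$ ($\mu<0$ if $c>0$). If $d<2\sqrt{c}$ there is no purely imaginary root, and if $d\ge2\sqrt{\beta+c}$ there are at least two purely imaginary roots. *)

(* Defs.v *)
From mathcomp Require Import all_boot all_order all_algebra.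
From mathcomp Require Import complex.
Set Implicit Arguments. Unset Strict Implicit. Unset Printing Implicit Defensive.
Import Order.TTheory GRing.Theory Num.Theory.
Local Open Scope ring_scope.
Local Open Scope complex_scope.

Definition imagC (R : rcfType) (mu : R) : R[i] := Complex 0 mu.

Definition p_ab (R : rcfType) (c d alpha beta : R) : {poly R[i]} :=
  (alpha%:C%:P - 'X^2) * (c%:C%:P - (imagC d)%:P * 'X - 'X^2)
  - beta%:C%:P * 'X^2.

(* "p has at least two roots of the form i*mu (mu real), counted with
   multiplicity": there is a duplicate-free list of reals mu such that each
   i*mu is a root and the multiplicities of the i*mu add up to >= 2. *)
Definition at_least_two_imag_roots (R : rcfType) (p : {poly R[i]}) : Prop :=
  exists s : seq R, [/\ uniq s,
    all (fun mu => root p (imagC mu)) s &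
    (2 <= \sum_(mu <- s) mup (imagC mu) p)%N].

(* Main.v *)
Require Import Defs.
From mathcomp Require Import all_boot all_order all_algebra.
From mathcomp Require Import complex polyrcf.
From mathcomp Require Import ring lra.
Import Order.TTheory GRing.Theory Num.Theory.
Local Open Scope ring_scope.
Local Open Scope complex_scope.
Set Implicit Arguments. Unset Strict Implicit.

Definition qf (R : rcfType) (c d alpha beta mu : R) :=
  (alpha + mu^+2)*(c + d*mu + mu^+2) + beta*mu^+2.

Lemma pE (R : rcfType) (c d alpha beta mu : R) :
  (p_ab c d alpha beta).[imagC mu] = (qf c d alpha beta mu)%:C.
Proof.
rewrite /p_ab /qf !hornerE /imagC /=.
apply/eqP; rewrite eq_complex /=; apply/andP; split; apply/eqP; ring.
Qed.

Lemma rootPE (R : rcfType) (c d alpha beta mu : R) :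
  root (p_ab c d alpha beta) (imagC mu) = (qf c d alpha beta mu == 0).
Proof.
rewrite /root pE; apply/eqP/eqP => [[]|->] //.
Qed.

Definition Qp (R : rcfType) (c d alpha beta : R) : {poly R} :=
  ('X^2 + alpha%:P)*('X^2 + d%:P*'X + c%:P) + beta%:P * 'X^2.

Lemma QpE (R : rcfType) (c d alpha beta mu : R) :
  (Qp c d alpha beta).[mu] = qf c d alpha beta mu.
Proof. rewrite /Qp /qf !hornerE; ring. Qed.

Lemma ivt_q (R : rcfType) (c d alpha beta a b : R) : a <= b ->
  qf c d alpha beta a * qf c d alpha beta b <= 0 ->
  exists2 x, a <= x <= b & qf c d alpha beta x = 0.
Proof.
move=> ab; rewrite -!QpE => h.
have [x xin /eqP rx] := polyrcf.poly_ivt ab h.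
exists x; first by rewrite in_itv /= in xin.
by rewrite -QpE.
Qed.

Lemma qf_pos (R : rcfType) (c d alpha beta t : R) :
  0 <= c -> 0 < d -> 0 <= beta -> 1 + `|alpha| <= t -> 0 < qf c d alpha beta t.
Proof.
move=> hc hd hb ht.
have h0 : 0 <= `|alpha| := normr_ge0 _.
have h1 : - alpha <= `|alpha| by rewrite -normrN ler_norm.
have h2 : 0 < alpha + t^+2 by nra.
have h3 : 0 < c + d*t + t^+2 by nra.
have := mulr_gt0 h2 h3; have := mulr_ge0 hb (sqr_ge0 t).
rewrite /qf; lra.
Qed.

Lemma qf_neg (R : rcfType) (c d alpha beta t : R) :
  0 <= c -> 0 < d -> 0 <= beta -> 1 + `|alpha| + d <= t -> 0 <= qf c d alpha beta (- t).
Proof.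
move=> hc hd hb ht.
have h0 : 0 <= `|alpha| := normr_ge0 _.
have h1 : - alpha <= `|alpha| by rewrite -normrN ler_norm.
have h2 : 0 <= alpha + t^+2 by nra.
have h3 : 0 <= c - d*t + t^+2 by nra.
have := mulr_ge0 h2 h3; have := mulr_ge0 hb (sqr_ge0 t).
rewrite /qf sqrrN; lra.
Qed.

Lemma p_neq0 (R : rcfType) (c d alpha beta : R) :
  0 <= c -> 0 < d -> 0 <= beta -> p_ab c d alpha beta != 0.
Proof.
move=> hc hd hb; apply/eqP => P0.
have := pE c d alpha beta (1 + `|alpha|); rewrite P0 horner0 => -[] h.
have := qf_pos hc hd hb (lexx (1 + `|alpha|)); rewrite -h ltxx //.
Qed.

Lemma mup_ge1 (R : rcfType) (c d alpha beta mu : R) :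
  0 <= c -> 0 < d -> 0 <= beta -> qf c d alpha beta mu = 0 ->
  (1 <= mup (imagC mu) (p_ab c d alpha beta))%N.
Proof.
move=> hc hd hb h; rewrite mup_geq ?p_neq0 // expr1 dvdp_XsubCl rootPE h //.
Qed.

Lemma two_roots (R : rcfType) (c d alpha beta m1 m2 : R) :
  0 <= c -> 0 < d -> 0 <= beta -> m1 != m2 ->
  qf c d alpha beta m1 = 0 -> qf c d alpha beta m2 = 0 ->
  at_least_two_imag_roots (p_ab c d alpha beta).
Proof.
move=> hc hd hb n12 h1 h2; exists [:: m1; m2]; split.
- by rewrite /= inE n12.
- by rewrite /= !rootPE h1 h2 eqxx.
- rewrite big_cons big_seq1; exact: leq_add (mup_ge1 hc hd hb h1) (mup_ge1 hc hd hb h2).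
Qed.

Lemma uniq_pos (R : rcfType) (c d alpha beta x y : R) :
  0 <= c -> 0 < d -> 0 <= beta -> 0 < x -> x < y ->
  qf c d alpha beta x = 0 -> qf c d alpha beta y = 0 -> False.
Proof.
rewrite /qf => hc hd hb hx hxy hqx hqy.
set u := alpha + x^+2 in hqx *; set v := alpha + y^+2 in hqy *.
set Dx := c + d*x + x^+2 in hqx *; set Dy := c + d*y + y^+2 in hqy *.
have hDx : 0 < Dx by rewrite /Dx; nra.
have hDy : 0 < Dy by rewrite /Dy; nra.
have huv : u < v by rewrite /u /v; nra.
have hv : v <= 0.
  rewrite leNgt; apply/negP => hv.
  have := mulr_gt0 hv hDy; have := mulr_ge0 hb (sqr_ge0 y); lra.
have hAB : Dy * x^+2 < Dx * y^+2.
  have e : Dx * y^+2 - Dy * x^+2 = (y - x) * (c*(y+x) + d*x*y) by rewrite /Dx /Dy; ring.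
  have : 0 < (y - x) * (c*(y+x) + d*x*y).
    apply: mulr_gt0; first lra.
    have := mulr_gt0 (mulr_gt0 hd hx) (lt_trans hx hxy).
    have := mulr_ge0 hc (ltW (addr_gt0 (lt_trans hx hxy) hx)); lra.
  lra.
have hB : 0 < Dy * x^+2 by apply: mulr_gt0 => //; exact: exprn_gt0.
have eq : u * (Dx * y^+2) = v * (Dy * x^+2).
  have e1 : u * Dx = - (beta * x^+2) by lra.
  have e2 : v * Dy = - (beta * y^+2) by lra.
  by rewrite mulrA e1 mulrA e2; ring.
have h1 : u * (Dx * y^+2) < v * (Dx * y^+2) by rewrite ltr_pM2r //; lra.
have h2 : v * (Dx * y^+2) <= v * (Dy * x^+2) by rewrite ler_wnM2l //; lra.
lra.
Qed.

Lemma pos_root (R : rcfType) (c d alpha beta : R) :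
  0 <= c -> 0 < d -> 0 <= beta -> alpha < 0 ->
  exists2 m, 0 < m & qf c d alpha beta m = 0.
Proof.
move=> hc hd hb ha.
set t := 1 + `|alpha|.
have ht : 0 <= t by rewrite /t; have := normr_ge0 alpha; lra.
have qt := qf_pos hc hd hb (lexx t).
have := hc; rewrite le_eqVlt => /predU1P [c0|cpos].
- set Rp : {poly R} := ('X^2 + alpha%:P)*('X + d%:P) + beta%:P*'X.
  have RpE x : Rp.[x] = (alpha + x^+2) * (x + d) + beta * x.
    by rewrite /Rp !hornerE; ring.
  have qE x : qf c d alpha beta x = x * Rp.[x].
    by rewrite RpE /qf -c0; ring.
  have h : Rp.[0] * Rp.[t] <= 0.
    rewrite !RpE; have h1 : 0 <= Rp.[t].
      apply: ltW.
      have tpos : 0 < t by rewrite /t; have := normr_ge0 alpha; lra.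
      have : 0 < t * Rp.[t] by rewrite -qE.
      by rewrite pmulr_rgt0.
    apply: mulr_le0_ge0; last by rewrite -RpE.
    rewrite expr2 mul0r !addr0 add0r mulr0 addr0; nra.
  have [x xin /eqP rx] := polyrcf.poly_ivt ht h.
  rewrite in_itv /= in xin; case/andP: xin => x0 _.
  exists x; last by rewrite qE rx mulr0.
  rewrite lt_neqAle x0 andbT; apply/eqP => ex; move: rx; rewrite -ex RpE.
  nra.
- have h : qf c d alpha beta 0 * qf c d alpha beta t <= 0.
    have q0 : qf c d alpha beta 0 = alpha * c by rewrite /qf; ring.
    rewrite q0; apply: mulr_le0_ge0 (ltW qt); nra.
  have [x /andP[x0 _] hx] := ivt_q ht h.
  exists x => //; rewrite lt_neqAle x0 andbT; apply/eqP => ex.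
  move: hx; rewrite -ex /qf; nra.
Qed.

Lemma npos_root (R : rcfType) (c d alpha beta : R) :
  0 <= c -> 0 < d -> 0 <= beta -> alpha < 0 ->
  exists m, [/\ m <= 0, (0 < c -> m < 0) & qf c d alpha beta m = 0].
Proof.
move=> hc hd hb ha.
have := hc; rewrite le_eqVlt => /predU1P [c0|cpos].
  exists 0; split => //; first by rewrite -c0 ltxx.
  by rewrite /qf -c0; ring.
set t := 1 + `|alpha| + d.
have ht : - t <= 0 by rewrite /t; have := normr_ge0 alpha; lra.
have qt := qf_neg hc hd hb (lexx t).
have h : qf c d alpha beta (-t) * qf c d alpha beta 0 <= 0.
  have q0 : qf c d alpha beta 0 = alpha * c by rewrite /qf; ring.
  rewrite q0 mulrC; apply: mulr_le0_ge0 qt; nra.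
have [x /andP[_ x0] hx] := ivt_q ht h.
exists x; split => // _; rewrite lt_neqAle x0 andbT; apply/eqP => ex.
move: hx; rewrite ex /qf; nra.
Qed.

Theorem lemma3p1 (R : rcfType) (c d alpha beta : R) :
  0 <= c -> 0 < d -> 0 <= beta ->
  (* (i) *)
  (alpha < 0 ->
     at_least_two_imag_roots (p_ab c d alpha beta)
     /\ (exists mu : R, [/\ 0 < mu, root (p_ab c d alpha beta) (imagC mu) &
           forall nu : R, 0 < nu -> root (p_ab c d alpha beta) (imagC nu) ->
             nu = mu])
     /\ (exists mu : R, [/\ mu <= 0, (0 < c -> mu < 0) &
           root (p_ab c d alpha beta) (imagC mu)]))
  /\
  (* (ii) *)
  (0 < alpha ->
     (forall mu : R, root (p_ab c d alpha beta) (imagC mu) ->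
        mu <= 0 /\ (0 < c -> mu < 0))
     /\ (d < 2 * Num.sqrt c ->
           forall mu : R, ~~ root (p_ab c d alpha beta) (imagC mu))
     /\ (2 * Num.sqrt (beta + c) <= d ->
           at_least_two_imag_roots (p_ab c d alpha beta))).
Proof.
move=> hc hd hb; split.
  move=> ha.
  have [mp mp0 hmp] := pos_root hc hd hb ha.
  have [mn [mn0 mnc hmn]] := npos_root hc hd hb ha.
  split; first apply: (two_roots (m1 := mp) (m2 := mn)) => //.
    by apply/eqP => e; move: mn0; rewrite -e leNgt mp0.
  split.
    exists mp; split => //; first by rewrite rootPE hmp.
    move=> nu nu0; rewrite rootPE => /eqP hnu.
    case: (ltgtP nu mp) => // hl.
      by case: (uniq_pos hc hd hb nu0 hl hnu hmp).
    by case: (uniq_pos hc hd hb mp0 hl hmp hnu).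
  by exists mn; split => //; rewrite rootPE hmn.
move=> ha.
have qpos mu : 0 < mu -> 0 < qf c d alpha beta mu.
  move=> hm; rewrite /qf.
  have h1 : 0 < alpha + mu^+2 by nra.
  have h2 : 0 < c + d*mu + mu^+2 by nra.
  have := mulr_gt0 h1 h2; have := mulr_ge0 hb (sqr_ge0 mu); lra.
split.
  move=> mu; rewrite rootPE => /eqP hmu.
  have mule : mu <= 0.
    by rewrite leNgt; apply/negP => /qpos; rewrite hmu ltxx.
  split => // cpos; rewrite lt_neqAle mule andbT; apply/eqP => e.
  move: hmu; rewrite e /qf; nra.
split.
  move=> hdc mu; rewrite rootPE gt_eqF //.
  have hs := sqr_sqrtr hc; have hs0 := sqrtr_ge0 c.
  set s := Num.sqrt c in hdc hs hs0.
  have hd2 : d^+2 < 4 * c by rewrite -hs; nra.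
  have h1 : 0 < alpha + mu^+2 by nra.
  have h2 : 0 < c + d*mu + mu^+2 by have := sqr_ge0 (2*mu + d); nra.
  rewrite /qf; have := mulr_gt0 h1 h2; have := mulr_ge0 hb (sqr_ge0 mu); lra.
move=> hdc.
have hbc : 0 <= beta + c by lra.
have hs := sqr_sqrtr hbc; have hs0 := sqrtr_ge0 (beta + c).
set s := Num.sqrt (beta + c) in hdc hs hs0.
have hd2 : 4 * (beta + c) <= d^+2 by rewrite -hs; nra.
set h := d / 2.
have dE : d = 2 * h by rewrite /h mulrC divfK // pnatr_eq0.
have hh : 0 < h by rewrite /h; lra.
have hd2' : beta + c <= h^+2 by move: hd2; rewrite dE; lra.
have qhE : qf c d alpha beta (- h) = (alpha + h^+2) * (c - h^+2) + beta * h^+2.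
  by rewrite /qf dE; ring.
have qh : qf c d alpha beta (- h) <= - (beta * alpha).
  rewrite qhE.
  have hx : 0 <= h^+2 - (beta + c) by lra.
  have := mulr_ge0 (ltW (addr_gt0 ha (exprn_gt0 2 hh))) hx; nra.
have := le_eqVlt (qf c d alpha beta (- h)) 0; rewrite (le_trans qh) ?oppr_le0 ?mulr_ge0 //; last by apply: ltW.
move=> /esym /predU1P [qh0|qhneg]; last first.
  set t := 1 + `|alpha| + d.
  have ht : - t <= - h by rewrite /t; have := normr_ge0 alpha; lra.
  have qt := qf_neg hc hd hb (lexx t).
  have i1 : qf c d alpha beta (-t) * qf c d alpha beta (-h) <= 0.
    rewrite mulrC; apply: mulr_le0_ge0 qt; exact: ltW.
  have [x1 /andP[_ x1h] hx1] := ivt_q ht i1.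
  have q0 : qf c d alpha beta 0 = alpha * c by rewrite /qf; ring.
  have hh0 : - h <= 0 by lra.
  have i2 : qf c d alpha beta (-h) * qf c d alpha beta 0 <= 0.
    rewrite q0; apply: mulr_le0_ge0; [exact: ltW | exact: mulr_ge0 (ltW ha) hc].
  have [x2 /andP[x2h _] hx2] := ivt_q hh0 i2.
  have n1 : x1 != - h by apply/eqP => e; move: hx1; rewrite e => e'; move: qhneg; rewrite e' ltxx.
  have n2 : x2 != - h by apply/eqP => e; move: hx2; rewrite e => e'; move: qhneg; rewrite e' ltxx.
  apply: (two_roots (m1 := x1) (m2 := x2)) => //.
  apply/eqP => e; move: n1 n2 x1h x2h; rewrite e => n1 n2 a b.
  by move: n1; rewrite eq_le a b.
have hb0 : beta = 0.
  apply/eqP; rewrite eq_le hb andbT.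
  have : 0 <= - (beta * alpha) by rewrite -qh0.
  nra.
subst beta.
have hch : c = h^+2.
  move: qh0; rewrite qhE mul0r addr0 => /eqP; rewrite mulf_eq0 => /orP [|]; first by
    move=> /eqP e; have := exprn_gt0 2 hh; lra.
  by rewrite subr_eq0 => /eqP.
subst c.
exists [:: - h]; split => //.
  by rewrite /= rootPE qh0 eqxx.
rewrite big_seq1 mup_geq ?p_neq0 //.
set x := imagC (- h).
have e1 : ((h^+2)%:C : R[i]) = -(x*x).
  by apply/eqP; rewrite eq_complex /= /x /imagC /=; apply/andP; split; apply/eqP; ring.
have e2 : imagC d = -(x+x).
  by apply/eqP; rewrite eq_complex /= /x /imagC /= dE; apply/andP; split; apply/eqP; ring.
have e3 : ((0 : R)%:C : R[i]) = 0 by [].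
have -> : p_ab (h^+2) d alpha 0 = ('X^2 - alpha%:C%:P) * ('X - x%:P)^+2.
  rewrite /p_ab e1 e2 e3 polyC0 !polyCN polyCM polyCD; ring.
exact: dvdp_mull.
Qed.
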